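(* For every $M\geq 1$, $$g(M)=\sum_{0\leq 2n\leq M-1}(M-2n)\binom{M-n-1}{n}.$$
   Context: The perimeter of a nonempty partition $\lambda$ with largest part $\lambda_1$ and $\ell(\lambda)$ parts is $\lambda_1+\ell(\lambda)-1$. $g(M)$ is the total number of parts, summed over all partitions into odd parts with perimeter $M$. *)

(* Defs.v *)
From mathcomp Require Import all_boot.
Set Implicit Arguments. Unset Strict Implicit. Unset Printing Implicit Defensive.

Definition is_partition (s : seq nat) : bool :=
  sorted geq s && all (fun x => 0 < x) s.

Definition odd_parts (s : seq nat) : bool := all odd s.

Definition perimeter (s : seq nat) : nat := head 0 s + size s - 1.

Fixpoint seqs_len (M k : nat) : seq (seq nat) :=
  match k with
  | 0 => [:: [::]]
  | k'.+1 => [seq x :: t | x <- iota 1 M, t <- seqs_len M k']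
  end.

(* Candidate sequences: length between 1 and M, entries in {1..M}.  Any nonempty
   partition of perimeter M has largest part <= M and at most M parts, so it
   occurs (exactly once) in this list. *)
Definition candidates (M : nat) : seq (seq nat) :=
  flatten [seq seqs_len M k | k <- iota 1 M].

Definition odd_partitions_perimeter (M : nat) : seq (seq nat) :=
  [seq s <- candidates M |
     [&& is_partition s, s != [::], odd_parts s & perimeter s == M]].

Definition g (M : nat) : nat :=
  \sum_(s <- odd_partitions_perimeter M) size s.

(* Main.v *)
Require Import Defs.
From mathcomp Require Import all_boot.
From mathcomp Require Import zify.

Definition cnt M k x := count (fun t => path geq x t && all odd t) (seqs_len M k).

Lemma seqs_len_S M k : seqs_len M k.+1 = [seq x :: t | x <- iota 1 M, t <- seqs_len M k].
Proof. by []. Qed.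

Lemma cnt0 M x : cnt M 0 x = 1.
Proof. by []. Qed.

Lemma cntS M k x : cnt M k.+1 x =
  \sum_(y <- iota 1 M) (if (y <= x) && odd y then cnt M k y else 0).
Proof.
rewrite /cnt seqs_len_S -sum1_count big_mkcond big_allpairs_dep /=.
apply: eq_bigr => y _.
case: (y <= x); case: (odd y) => /=.
- by rewrite -sum1_count [RHS]big_mkcond.
- by apply: big1 => t _; rewrite andbF.
- by apply: big1.
- by apply: big1.
Qed.

Lemma hockey k x : \sum_(1 <= y < x.+2) (if odd y then 'C(k + y.-1./2, k) else 0)
   = 'C(k.+1 + x./2, k.+1).
Proof.
elim: x => [|x IH]; first by rewrite big_nat1 /= !addn0 !binn.
rewrite big_nat_recr //= IH /= negbK uphalf_half.
case: (odd x) => /=.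
  by rewrite -[k.+1 + (1 + _)]/((k + (1 + x./2)).+1) binS addnA addn1 addSn.
by rewrite add0n addn0.
Qed.

Lemma cnt_val M k x : 0 < x <= M -> cnt M k x = 'C(k + x.-1./2, k).
Proof.
elim: k x => [|k IH] x Hx; first by rewrite cnt0 bin0.
rewrite cntS.
have -> : \sum_(y <- iota 1 M) (if (y <= x) && odd y then cnt M k y else 0)
   = \sum_(1 <= y < M.+1) (if (y <= x) && odd y then cnt M k y else 0).
  by rewrite /index_iota subSS subn0.
rewrite (big_cat_nat _ (n := x.+1)) //=; last by lia.
rewrite [X in _ + X]big1_seq ?addn0; last first.
  move=> y /andP [_]; rewrite mem_index_iota => Hy.
  by have -> : (y <= x) = false by lia.
case: x Hx => [|x] Hx; first by lia.
rewrite -hockey big_nat_cond [RHS]big_nat_cond.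
apply: eq_bigr => y /andP [/andP [Hy1 Hy2] _].
have -> : y <= x.+1 by lia.
by case: (odd y) => //=; rewrite IH //; lia.
Qed.

Lemma mem_seqs M k t : t \in seqs_len M k -> (size t == k) && all (fun x => 0 < x) t.
Proof.
elim: k t => [|k IH] t /=; first by rewrite inE => /eqP ->.
case/allpairsP => [[x u] [/= Hx Hu ->]] /=.
move: (IH u Hu) => /andP [/eqP -> ->]; rewrite mem_iota in Hx.
by rewrite eqxx /=; lia.
Qed.

Lemma sum_if_const (r : seq (seq nat)) (a : pred (seq nat)) c :
  \sum_(t <- r) (if a t then c else 0) = c * count a r.
Proof.
elim: r => [|t r IH]; first by rewrite big_nil muln0.
by rewrite big_cons IH /=; case: (a t); rewrite ?mulnDr ?muln1.
Qed.

Lemma g_sum M : g M = \sum_(0 <= j < M) j.+1 * (if odd (M - j) then cnt M j (M - j) else 0).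
Proof.
rewrite /g /odd_partitions_perimeter big_filter /candidates big_flatten /= big_map.
have -> : iota 1 M = index_iota 1 M.+1 by rewrite /index_iota subSS subn0.
rewrite big_add1 /= [LHS]big_nat_cond [RHS]big_nat_cond.
apply: eq_bigr => j /andP [/andP [_ Hj] _].
rewrite big_mkcond big_allpairs_dep /=.
have HM : M - j \in iota 1 M by rewrite mem_iota; lia.
rewrite (bigD1_seq (M - j)) ?iota_uniq //= [X in _ + X]big1_seq ?addn0 /=; last first.
  move=> x /andP [Hx _]; rewrite big_seq; apply: big1 => t Ht.
  move: (@mem_seqs M j t Ht) => /andP [/eqP St _].
  rewrite /perimeter /= St.
  have -> : (x + j.+1 - 1 == M) = false by apply/eqP; move/eqP: Hx; lia.
  by rewrite !andbF.
rewrite big_seq.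
under eq_bigr => t Ht.
  move: (@mem_seqs M j t Ht) => /andP [/eqP St Pt].
  rewrite /perimeter /is_partition /odd_parts /= St Pt.
  have -> : (M - j + j.+1 - 1 == M) = true by apply/eqP; lia.
  have -> : 0 < M - j by lia.
  rewrite andbT /=.
  over.
rewrite -big_seq.
case: (odd (M - j)) => /=.
- rewrite -sum_if_const; apply: eq_bigr => t _.
  by case: (path geq (M - j) t); case: (all odd t).
- by rewrite muln0; apply: big1 => t _; rewrite !andbF.
Qed.

Lemma even_sum (F : nat -> nat) M :
  \sum_(0 <= i < M) (if ~~ odd i then F i else 0) = \sum_(0 <= n < uphalf M) F (2 * n).
Proof.
elim: M => [|M IH]; first by rewrite !big_geq.
rewrite big_nat_recr //= IH.
have H := odd_double_half M.
rewrite uphalf_half; case: (odd M) H => /= H.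
  by rewrite addn0.
rewrite big_nat_recr //=; congr (_ + F _); rewrite add0n in H; lia.
Qed.

Theorem mainTheorem8 (M : nat) : 1 <= M ->
  g M = \sum_(0 <= n < M | 2 * n <= M - 1) (M - 2 * n) * 'C(M - n - 1, n).
Proof.
move=> HM.
rewrite g_sum.
have -> : \sum_(0 <= j < M) j.+1 * (if odd (M - j) then cnt M j (M - j) else 0)
   = \sum_(0 <= j < M) j.+1 * (if odd (M - j) then 'C(j + (M - j).-1./2, j) else 0).
  rewrite big_nat_cond [RHS]big_nat_cond; apply: eq_bigr => j /andP [/andP [_ Hj] _].
  by rewrite cnt_val //; lia.
rewrite big_nat_rev /= add0n.
have -> : \sum_(0 <= i < M) (M - i.+1).+1 *
      (if odd (M - (M - i.+1)) then 'C(M - i.+1 + (M - (M - i.+1)).-1./2, M - i.+1) else 0)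
   = \sum_(0 <= i < M) (if ~~ odd i then (M - i) * 'C(M - i.+1 + i./2, M - i.+1) else 0).
  rewrite big_nat_cond [RHS]big_nat_cond; apply: eq_bigr => i /andP [/andP [_ Hi] _].
  have -> : M - (M - i.+1) = i.+1 by lia.
  have -> : (M - i.+1).+1 = M - i by lia.
  by rewrite /= ; case: (odd i) => /=; rewrite ?muln0.
rewrite even_sum.
have Hu : uphalf M <= M by rewrite uphalf_half; have := odd_double_half M; case: (odd M) => /=; lia.
rewrite (@big_nat_widen _ _ _ 0 (uphalf M) M xpredT) //=.
rewrite big_nat_cond [RHS]big_nat_cond.
apply: eq_big => n.
  have := odd_double_half M; rewrite uphalf_half.
  case: (odd M) => /= H; congr (_ && _); apply/idP/idP; lia.
move=> /andP [/andP [_ Hn] Hn2].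
have H2 : 2 * n < M by move: Hn2; have := odd_double_half M; rewrite uphalf_half; case: (odd M) => /=; lia.
have -> : (2 * n)./2 = n by rewrite mul2n doubleK.
have -> : M - (2 * n).+1 + n = M - n - 1 by lia.
have -> : M - (2 * n).+1 = (M - n - 1) - n by lia.
by rewrite bin_sub //; lia.
Qed.
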